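(* Let $q\ge 2$, let $(R_i)_{i\ge1}$ be reals with $R_i\to\infty$, and let $n_i\to\infty$. For every $i$ let $\mathcal C_i$ be an ID code for $\Pi^q_{n_i}$ with $M_i\ge 2^{R_i n_i^{q-1}}$ messages and type-I and type-II error probabilities $\lambda_{1,i},\lambda_{2,i}$. Then $\liminf_{i\to\infty}(\lambda_{1,i}+\lambda_{2,i})\ge 1$.
   Context: Fix an integer $q\ge 2$ and let $\mathcal A_q=\{1,\dots,q\}$. For $n\ge 1$, $S_n$ is the symmetric group on $\{1,\dots,n\}$, and for $\mathbf x\in\mathcal A_q^n$, $\sigma\in S_n$, we write $\sigma\mathbf x=(x_{\sigma^{-1}(1)},\dots,x_{\sigma^{-1}(n)})$. The $n$-block $q$-ary uniform permutation channel $\Pi^q_n$ has input and output alphabet $\mathcal A_q^n$ and transition probabilities $\Pi^q_n(\mathbf y\mid\mathbf x)=\frac{1}{n!}\sum_{\sigma\in S_n}\mathbf 1\{\mathbf y=\sigma\mathbf x\}$; $\Pi^q$ denotes the family $(\Pi^q_n)_{n\ge1}$. An ID code (with deterministic decoders) with $M$ messages for $\Pi^q_n$ (an ''$(n,M,\lambda_1,\lambda_2)$ ID code'') is a family $\{(Q_i,\mathcal D_i)\}_{i=1}^M$ where each $Q_i$ is a probability distribution on $\mathcal A_q^n$ (the stochastic encoder of message $i$) and $\mathcal D_i\subseteq\mathcal A_q^n$ (the acceptance region of message $i$). Its error probabilities are $\lambda_{i\to j}=\sum_{\mathbf x}Q_i(\mathbf x)\sum_{\mathbf y\in\mathcal D_j}\Pi^q_n(\mathbf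 y\mid\mathbf x)$ for $i\ne j$ and $\lambda_{i\not\to i}=\sum_{\mathbf x}Q_i(\mathbf x)\sum_{\mathbf y\notin\mathcal D_i}\Pi^q_n(\mathbf y\mid\mathbf x)$; the type-I error probability is $\lambda_1=\max_i\lambda_{i\not\to i}$ and the type-II error probability is $\lambda_2=\max_{i\ne j}\lambda_{i\to j}$. *)

(* Defs.v *)
From HB Require Import structures.
From mathcomp Require Import all_boot all_order all_algebra all_fingroup.
From mathcomp Require Import all_classical all_reals all_analysis.
Set Implicit Arguments. Unset Strict Implicit. Unset Printing Implicit Defensive.
Import Order.TTheory GRing.Theory Num.Theory.
Local Open Scope ring_scope.

(* Alphabet A_q = {1,...,q} is represented by 'I_q = {0,...,q-1}. *)
Definition word (q n : nat) := {ffun 'I_n -> 'I_q}.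

Definition permw (q n : nat) (s : 'S_n) (x : word q n) : word q n :=
  [ffun j => x ((s^-1)%g j)].

Definition chan (R : realType) (q n : nat) (y x : word q n) : R :=
  (#|[set s : 'S_n | y == permw s x]|)%:R / (n`!)%:R.

Record IDcode (R : realType) (q n : nat) := {
  idM : nat;
  idQ : 'I_idM -> {ffun word q n -> R};
  idD : 'I_idM -> {set word q n};
  idQ_ge0 : forall i x, 0 <= idQ i x;
  idQ_sum1 : forall i, \sum_(x : word q n) idQ i x = 1 }.

Arguments idM {R q n} _.
Arguments idQ {R q n} _ _.
Arguments idD {R q n} _ _.

Section Errors.
Variables (R : realType) (q n : nat) (C : IDcode R q n).

Definition err_to (i j : 'I_(idM C)) : R :=
  \sum_(x : word q n) idQ C i x * \sum_(y in idD C j) chan R y x.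

Definition err_not (i : 'I_(idM C)) : R :=
  \sum_(x : word q n) idQ C i x * \sum_(y in ~: idD C i) chan R y x.

Definition lambda1 : R := \big[Num.max/0]_(i < idM C) err_not i.

(* type-II error: max_{i <> j} lambda_{i -> j} (0 if there is no such pair) *)
Definition lambda2 : R :=
  \big[Num.max/0]_(i < idM C) \big[Num.max/0]_(j < idM C | j != i) err_to i j.
End Errors.

(* Main.v *)
Require Import Defs.
From HB Require Import structures.
From mathcomp Require Import all_boot all_order all_algebra all_fingroup.
From mathcomp Require Import all_classical all_reals all_analysis.
From mathcomp Require Import ring lra zify.
Import Order.TTheory GRing.Theory Num.Theory.
Local Open Scope classical_set_scope.
Local Open Scope ring_scope.
Local Close Scope classical_set_scope.

Lemma sum_count_mem_ord q (s : seq 'I_q) : (\sum_(a < q) count_mem a s = size s)%N.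
Proof.
elim: s => [|x s IH] /=; first by rewrite big1.
rewrite big_split /= IH -add1n; congr (_ + _)%N.
rewrite (bigD1 x) //= eqxx big1 // => a /negbTE; rewrite eq_sym => ->; done.
Qed.

Lemma perm_of_cnt q n (x x' : {ffun 'I_n -> 'I_q}) :
  (forall a, count_mem a [tuple x j | j < n] = count_mem a [tuple x' j | j < n]) ->
  exists s : 'S_n, forall j, x' j = x (s j).
Proof.
move=> H.
have : perm_eq [tuple x' j | j < n] [tuple x j | j < n].
  by apply/allP => c _; apply/eqP; rewrite H.
case/tuple_permP => s Hs; exists s => j.
have := congr1 (fun t => nth (x j) t j) Hs.
by rewrite -!(tnth_nth (x j)) !tnth_mktuple.
Qed.
Lemma permwM q n (s u : 'S_n) (x : word q n) : permw u (permw s x) = permw (s * u) x.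
Proof. by apply/ffunP => j; rewrite !ffunE invMg permM. Qed.

Lemma chan_perm (R : realType) q n (s : 'S_n) (x y : word q n) :
  chan R y (permw s x) = chan R y x.
Proof.
rewrite /chan; congr (_%:R / _).
have -> : [set u : 'S_n | y == permw u x] = (mulg s) @: [set u | y == permw u (permw s x)].
  apply/setP => u; rewrite inE; apply/idP/imsetP.
    move=> H; exists (s^-1 * u)%g; last by rewrite mulKVg.
    by rewrite inE permwM mulKVg.
  by case=> v; rewrite inE permwM => H ->.
by rewrite card_imset //; apply: mulgI.
Qed.

Lemma chan_ge0 (R : realType) q n (x y : word q n) : 0 <= chan R y x.
Proof. by rewrite /chan divr_ge0 ?ler0n. Qed.

Lemma chan_sum1 (R : realType) q n (x : word q n) : \sum_y chan R y x = 1.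
Proof.
rewrite /chan -mulr_suml -natr_sum.
have -> : (\sum_y #|[set s : 'S_n | y == permw s x]| = n`!)%N.
  rewrite -card_Sn -sum1_card.
  rewrite (partition_big (fun s => permw s x) predT) //=.
  apply: eq_bigr => y _; rewrite sum1_card; apply: eq_card => s.
  by rewrite !inE eq_sym.
by rewrite mulfV // pnatr_eq0 -lt0n fact_gt0.
Qed.
Lemma key_diff (R : realType) (X T : finType) (Qj Qm g : X -> R) (tau : X -> T) (d : R) :
  (forall x, 0 <= g x <= 1) ->
  (forall x x', tau x = tau x' -> g x = g x') ->
  (forall t, `| \sum_(x | tau x == t) Qj x - \sum_(x | tau x == t) Qm x | <= d) ->
  \sum_x Qj x * g x - \sum_x Qm x * g x <= #|T|%:R * d.
Proof.
move=> g01 gc Hd.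
rewrite -sumrB (partition_big tau predT) //=.
rewrite mulr_natl -sumr_const.
apply: ler_sum => t _.
case: (pickP (fun x => tau x == t)) => [x0 /eqP Hx0|H0]; last first.
  rewrite big_pred0; last by move=> x; rewrite H0.
  by have := Hd t; apply: le_trans.
have -> : \sum_(i | true && (tau i == t)) (Qj i * g i - Qm i * g i)
   = g x0 * (\sum_(x | tau x == t) Qj x - \sum_(x | tau x == t) Qm x).
  rewrite mulrBr !mulr_sumr -sumrB; apply: eq_bigr => x /eqP Hx.
  by rewrite (gc x x0) ?Hx0 // [g x0 * _]mulrC [g x0 * _]mulrC.
apply: le_trans (ler_norm _) _; rewrite normrM.
have /andP [g0 g1] := g01 x0.
rewrite -[d]mul1r; apply: ler_pM => //; first by rewrite ger0_norm.
Qed.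
Lemma bin_le_exp2 n m : ('C(n, m) <= 2 ^ n)%N.
Proof.
elim: n m => [|n IH] [|m] //=; first by rewrite bin0 expn_gt0.
by rewrite binS expnS mul2n -addnn leq_add.
Qed.

Section Quant.
Variables (R : realType) (T : finType) (M L : nat) (p : 'I_M -> T -> R).
Hypothesis L0 : (0 < L)%N.
Hypothesis p0 : forall m t, 0 <= p m t.
Hypothesis p1 : forall m, \sum_t p m t = 1.

Definition cdf m (k : nat) := \sum_(t | (enum_rank t < k)%N) p m t.

Lemma cdf_ge0 m k : 0 <= cdf m k.
Proof. by apply: sumr_ge0 => t _; apply: p0. Qed.

Lemma cdf_le1 m k : cdf m k <= 1.
Proof.
rewrite -(p1 m) /cdf [X in _ <= X](bigID (fun t => (enum_rank t < k)%N)) /=.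
by rewrite lerDl sumr_ge0.
Qed.

Lemma cdf_mono m k : cdf m k <= cdf m k.+1.
Proof.
rewrite /cdf [X in _ <= X](bigID (fun t => (enum_rank t < k)%N)) /=.
rewrite [X in _ <= X + _](eq_bigl (fun t => (enum_rank t < k)%N)); last first.
  by move=> t; case: (ltnP (enum_rank t) k) => H; rewrite ?andbT ?andbF // ltnW.
by rewrite lerDl sumr_ge0 // => t _; apply: p0.
Qed.

Lemma cdfS m t : p m t = cdf m (enum_rank t).+1 - cdf m (enum_rank t).
Proof.
rewrite /cdf (bigD1 t) //= ?ltnSn //.
rewrite (eq_bigl (fun t' => (enum_rank t' < enum_rank t)%N)) ?addrK //.
move=> tt; rewrite ltnS leq_eqVlt.
case: (eqVneq tt t) => [->|ne]; first by rewrite ltnn eqxx andbF.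
have -> : (enum_rank tt == enum_rank t :> nat) = false.
  by rewrite (inj_eq val_inj) (inj_eq enum_rank_inj) (negbTE ne).
by rewrite andbT.
Qed.

Definition qt m : (#|T|.+1).-tuple 'I_L.+1 :=
  [tuple inord (Num.truncn (L%:R * cdf m j)) | j < #|T|.+1].

Lemma trunc_le m k : (Num.truncn (L%:R * cdf m k) <= L)%N.
Proof.
rewrite Num.Theory.truncn_le_nat; apply: (le_lt_trans (y := L%:R)).
  by rewrite -[X in _ <= X]mulr1 ler_wpM2l ?ler0n ?cdf_le1.
by rewrite ltr_nat.
Qed.

Lemma qt_map m : map val (qt m) = [seq Num.truncn (L%:R * cdf m k) | k <- iota 0 #|T|.+1].
Proof.
rewrite -val_enum_ord -map_comp /= -map_comp; apply: eq_map => j /=.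
by rewrite inordK // ltnS trunc_le.
Qed.

Lemma qt_sorted m : qt m \in [set t : (#|T|.+1).-tuple 'I_L.+1 | sorted leq (map val t)].
Proof.
rewrite inE qt_map; apply/(sortedP 0%N) => i.
rewrite size_map size_iota => Hi.
have Hi' : (i < #|T|.+1)%N by apply: ltnW.
rewrite !(nth_map 0%N) ?size_iota // !nth_iota //.
by apply: le_truncn; rewrite ler_wpM2l ?ler0n // add0n cdf_mono.
Qed.

Lemma trunc_eq_close (x y : R) : 0 <= x -> 0 <= y -> Num.truncn x = Num.truncn y -> `|x - y| < 1.
Proof.
move=> x0 y0 E.
have /andP [a1 a2] := truncn_itv x0; have /andP [b1 b2] := truncn_itv y0.
rewrite E in a1 a2.
move: a1 a2 b1 b2; rewrite -!natr1; set N := (Num.truncn y)%:R => a1 a2 b1 b2.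
rewrite ltr_norml; apply/andP; split; lra.
Qed.


Lemma qt_close m j : qt m = qt j -> forall t, `|p m t - p j t| <= 2 / L%:R.
Proof.
move=> E t.
have Hk k : (k < #|T|.+1)%N -> `|cdf m k - cdf j k| < 1 / L%:R.
  move=> Hk; have := congr1 (fun s : (#|T|.+1).-tuple _ => nth 0%N (map val s) k) E.
  rewrite /= !qt_map !(nth_map 0%N) ?size_iota // !nth_iota // add0n => E'.
  have := trunc_eq_close _ _ (mulr_ge0 (ler0n R L) (cdf_ge0 m k))
                         (mulr_ge0 (ler0n R L) (cdf_ge0 j k)) E'.
  rewrite -mulrBr normrM ger0_norm ?ler0n // => H.
  have L0' : 0 < (L%:R : R) by rewrite ltr0n.
  by rewrite ltr_pdivlMr // mulrC.
rewrite !cdfS.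
set a := cdf m _; set b := cdf m _; set c := cdf j _; set d := cdf j _.
have E1 : a - b - (c - d) = (a - c) - (b - d) by lra.
rewrite E1; apply: le_trans (ler_normB _ _) _.
have -> : 2 / L%:R = 1 / L%:R + 1 / (L%:R : R) by rewrite -mulrDl.
apply: ltW; apply: ltrD; apply: Hk; first by rewrite ltnS ltn_ord.
by rewrite ltnS ltnW.
Qed.

Lemma quant_bound :
  (forall m j, m != j -> exists t, 2 / L%:R < `|p m t - p j t|) ->
  (M <= 2 ^ (#|T|.+1 + L))%N.
Proof.
move=> H.
have inj : injective qt.
  move=> m j E; apply/eqP; apply/negPn/negP => ne.
  have [t Ht] := H m j ne.
  by have := qt_close _ _ E t; rewrite leNgt Ht.
apply: leq_trans (bin_le_exp2 _ #|T|.+1).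
have HS : [set qt x | x : 'I_M] \subset [set t : (#|T|.+1).-tuple 'I_L.+1 | sorted leq (map val t)].
  by apply/fintype.subsetP => t /imsetP [m _ ->]; apply: qt_sorted.
have := fintype.subset_leq_card HS.
rewrite card_sorted_tuples card_imset //.
by rewrite card_ord.

Qed.
End Quant.
Lemma lambda_bounds (R : realType) (q n : nat) (C : IDcode R q n) (m j : 'I_(idM C)) :
  m != j -> err_to m j <= lambda2 C /\ err_not m <= lambda1 C.
Proof.
move=> ne; split.
  apply: le_trans (le_bigmax _ (fun i => \big[Num.max/0]_(j0 < idM C | j0 != i) err_to i j0) m).
  by apply: (le_bigmax_cond _ (fun j0 => err_to m j0)); rewrite eq_sym.
by apply: (le_bigmax _ (fun i => err_not i)).
Qed.

Section Chan.
Variables (R : realType) (p n : nat).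
Definition tau (x : word p.+1 n) : {ffun 'I_p -> 'I_n.+1} :=
  [ffun a => inord (count_mem (widen_ord (leqnSn p) a) [tuple x j | j < n])].

Lemma tau_chan (x x' y : word p.+1 n) : tau x = tau x' -> chan R y x = chan R y x'.
Proof.
move=> E.
have cb b (z : word p.+1 n) : (count_mem b [tuple z j | j < n] < n.+1)%N.
  by rewrite ltnS (leq_trans (count_size _ _)) // size_tuple.
have Hw a : count_mem (widen_ord (leqnSn p) a) [tuple x j | j < n]
          = count_mem (widen_ord (leqnSn p) a) [tuple x' j | j < n].
  have := congr1 (fun f : {ffun 'I_p -> 'I_n.+1} => val (f a)) E; rewrite /= !ffunE /= !inordK //; apply: cb.
have Hall a : count_mem a [tuple x j | j < n] = count_mem a [tuple x' j | j < n].
  case: (ltnP a p) => Ha.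
    have -> : a = widen_ord (leqnSn p) (Ordinal Ha) by apply: val_inj.
    exact: Hw.
  have -> : a = ord_max.
    by apply: val_inj => /=; apply/eqP; rewrite eqn_leq Ha -ltnS ltn_ord.
  have := sum_count_mem_ord _ [tuple x j | j < n].
  have := sum_count_mem_ord _ [tuple x' j | j < n].
  rewrite !big_ord_recr /= !size_tuple => E2 E1.
  have ES : (\sum_(i < p) count_mem (widen_ord (leqnSn p) i) [tuple x j | j < n]
     = \sum_(i < p) count_mem (widen_ord (leqnSn p) i) [tuple x' j | j < n])%N.
    by apply: eq_bigr => i _; apply: Hw.
  rewrite ES in E1; apply/eqP; rewrite -(eqn_add2l (\sum_(i < p) count_mem (widen_ord (leqnSn p) i) [tuple x' j | j < n])%N).
  by rewrite E1 E2.
have [s Hs] := perm_of_cnt _ _ _ _ Hall.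
have -> : x' = permw s^-1 x by apply/ffunP => j; rewrite ffunE invgK Hs.
by rewrite chan_perm.
Qed.
End Chan.
Arguments tau {p n}.

Local Open Scope classical_set_scope.
Local Open Scope ring_scope.

Theorem theorem1 (R : realType) (q : nat) (Rs : nat -> R) (n : nat -> nat)
    (C : forall i : nat, IDcode R q (n i)) :
  (2 <= q)%N ->
  Rs @ \oo --> +oo ->
  (forall N : nat, exists i0 : nat, forall i, (i0 <= i)%N -> (N <= n i)%N) ->
  (forall i, (2:R) `^ (Rs i * (n i)%:R ^+ q.-1) <= (idM (C i))%:R) ->
  (* liminf_i (lambda1_i + lambda2_i) >= 1 *)
  forall eps : R, 0 < eps ->
    exists i0 : nat, forall i, (i0 <= i)%N ->
      1 - eps <= lambda1 (C i) + lambda2 (C i).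
Proof.
move=> q2 HR Hn HM eps eps0.
move: C HM; case: q q2 => [//|p] q2 C HM.
have p0 : (0 < p)%N by [].
set N0 := (Num.truncn (2 / eps)).+1.
have N0pos : 0 < (N0%:R : R) by rewrite ltr0n.
have HN0 : 2 / N0%:R < eps.
  have h := truncnS_gt (2 / eps).
  rewrite ltr_pdivrMr // in h; rewrite ltr_pdivrMr // mulrC //.
set B : R := ((N0 + 2) * 2 ^ p)%N%:R.
have [i1 Hi1] : exists i1, forall i, (i1 <= i)%N -> B + 1 < Rs i.
  by move/cvgryPgt: HR => /(_ (B + 1)) [i1 _ Hi1]; exists i1 => i Hi; apply: Hi1.
have [i2 Hi2] := Hn 1%N.
exists (maxn i1 i2) => i Hi.
rewrite leNgt; apply/negP => Hlt.
have HRi := Hi1 i (leq_trans (leq_maxl _ _) Hi).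
have Hni := Hi2 i (leq_trans (leq_maxr _ _) Hi).
move: (n i) (C i) (HM i) Hlt Hni => nn CC HMi Hlt Hni.
rewrite /= in HMi.
pose T := {ffun 'I_p -> 'I_nn.+1}.
pose K := #|T|.
have HK : K = (nn.+1 ^ p)%N by rewrite /K card_ffun !card_ord.
have K0 : (0 < K)%N by rewrite HK expn_gt0.
pose g m (x : word p.+1 nn) := \sum_(y in idD CC m) chan R y x.
pose pm m (t : T) := \sum_(x | tau x == t) idQ CC m x.
have g01 m x : 0 <= g m x <= 1.
  apply/andP; split; first by apply: sumr_ge0 => y _; apply: chan_ge0.
  rewrite -(chan_sum1 R _ _ x) [X in _ <= X](bigID (fun y => y \in idD CC m)) /=.
  by rewrite lerDl sumr_ge0 // => y _; apply: chan_ge0.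
have gc m x x' : tau x = tau x' -> g m x = g m x'.
  by move=> E; apply: eq_bigr => y _; apply: tau_chan.
have Hnot m : err_not m = 1 - \sum_x idQ CC m x * g m x.
  rewrite /err_not -(idQ_sum1 m) -sumrB; apply: eq_bigr => x _.
  rewrite -[X in X - _]mulr1 -mulrBr; congr (_ * _).
  rewrite -(chan_sum1 R _ _ x) (bigID (fun y => y \in idD CC m) predT) /=.
  rewrite (eq_bigl (fun y => y \notin idD CC m)); last by move=> y; rewrite inE.
  by rewrite addrC addrK.
have HMb : (idM CC <= 2 ^ (K.+1 + K * N0))%N.
  apply: (quant_bound R T (idM CC) (K * N0) pm).
  - by rewrite muln_gt0 K0.
  - by move=> m t; apply: sumr_ge0 => x _; apply: idQ_ge0.
  - move=> m; rewrite -(idQ_sum1 m) [RHS](partition_big tau predT) //=.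
  move=> m j ne.
  case: (pickP (fun t => 2 / (K * N0)%:R < `|pm m t - pm j t|)) => [t Ht|Hno].
    by exists t.
  exfalso.
  have Hd t : `|pm m t - pm j t| <= 2 / (K * N0)%:R by rewrite leNgt Hno.
  have Hkd := key_diff _ _ _ (idQ CC m) (idQ CC j) (g m) tau (2 / (K * N0)%:R) (g01 m) (gc m) Hd.
  have ne' : j != m by rewrite eq_sym.
  have [_ H1] := lambda_bounds _ _ _ _ _ _ ne.
  have [H2 _] := lambda_bounds _ _ _ _ _ _ ne'.
  have E2 : err_to j m = \sum_x idQ CC j x * g m x by [].
  rewrite Hnot in H1; rewrite E2 in H2.
  have HKd : #|T|%:R * (2 / (K * N0)%:R) = 2 / (N0%:R : R).
    rewrite natrM -/K; field; apply/andP; split; last by rewrite pnatr_eq0 -lt0n.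
    by rewrite gt_eqF.
  rewrite HKd in Hkd.
  lra.
set E := ((N0 + 2) * 2 ^ p * nn ^ p)%N.
have HK2 : (K <= 2 ^ p * nn ^ p)%N.
  by rewrite HK -expnMn leq_exp2r // mul2n -addnn -addn1 leq_add2l.
have HE : (K.+1 + K * N0 <= E)%N.
  rewrite /E.
  have : (K * (N0 + 2) <= 2 ^ p * nn ^ p * (N0 + 2))%N by rewrite leq_mul2r HK2 orbT.
  nia.
have HME : (idM CC <= 2 ^ E)%N := leq_trans HMb (@leq_pexp2l 2 _ _ isT HE).
have Hnp : 1 <= (nn%:R : R) ^+ p by rewrite exprn_ege1 // ler1n.
have HRE : (E.+1)%:R <= Rs i * nn%:R ^+ p.
  rewrite -addn1 natrD /E natrM natrX -/B.
  set X := (nn%:R : R) ^+ p in Hnp *.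
  have := mulr_ge0 (x := Rs i - B - 1) (y := X - 1); nra.
have : ((2 ^ E.+1)%N%:R : R) <= (idM CC)%:R.
  rewrite natrX -powR_mulrn ?ler0n //.
  apply: le_trans HMi; apply: ler_powR => //; by rewrite ler1n.
rewrite ler_nat => H; have := leq_trans H HME.
by rewrite leq_exp2l // ltnn.
Qed.
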